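(* Let $k$ be a field of characteristic zero, let $S=U(\mathfrak{sl}_2(k))$ be the enveloping algebra with standard basis $E,F,H$ of $\mathfrak{sl}_2(k)$ ($[H,E]=2E$, $[H,F]=-2F$, $[E,F]=H$), let $R=k[E]\subseteq S$ be the subalgebra generated by $E$, and let $f$ be the inclusion. Then the correspondence $\mathbf r\colon\operatorname{Spec} S\to\operatorname{Spec} R$ is not continuous; specifically, for $I=RE$, the set $\mathbf r^{[-1]}V_R(I)$ is not closed in $\operatorname{Spec} S$.
   Context: $\operatorname{Spec}$ carries the Zariski topology, closed sets $V_A(X)=\{P: P\supseteq X\}$. For $P\in\operatorname{Spec} S$, $\mathbf rP$ is the set of prime ideals of $R$ minimal over $P\cap R$; $\mathbf r^{[-1]}V=\{P\in\operatorname{Spec} S:\mathbf rP\subseteq V\}$; $\mathbf r$ is continuous if $\mathbf r^{[-1]}V$ is closed for all closed $V\subseteq\operatorname{Spec} R$. *)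

(* Defs.v *)
From mathcomp Require Import all_boot all_algebra.
Set Implicit Arguments. Unset Strict Implicit. Unset Printing Implicit Defensive.
Import GRing.Theory.
Local Open Scope ring_scope.

Definition sset (T : Type) := T -> Prop.
Definition ssub (T : Type) (X Y : sset T) := forall x, X x -> Y x.
Definition sall (T : Type) : sset T := fun _ => True.
Definition scap (T : Type) (X Y : sset T) : sset T := fun x => X x /\ Y x.

Section RingSpec.
Variable T : pzRingType.

(* Two-sided ideal of the subring with carrier A (A = sall T for the whole ring). *)
Definition ideal_in (A J : sset T) : Prop :=
  [/\ ssub J A, J 0,
      (forall x y, J x -> J y -> J (x - y)) &
      (forall a x, A a -> J x -> J (a * x) /\ J (x * a))].

Definition prime_in (A P : sset T) : Prop :=
  [/\ ideal_in A P, ~ ssub A P &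
      forall I J, ideal_in A I -> ideal_in A J ->
        (forall a b, I a -> J b -> P (a * b)) -> ssub I P \/ ssub J P].

Definition Vset (A X : sset T) : sset (sset T) :=
  fun P => prime_in A P /\ ssub X P.

Definition closed_in (A : sset T) (C : sset (sset T)) : Prop :=
  exists X, ssub X A /\ forall P, C P <-> Vset A X P.

(* Q ∈ r P : Q is a prime of the subring R minimal over P ∩ R. *)
Definition rcorr (R P Q : sset T) : Prop :=
  [/\ prime_in R Q, ssub (scap P R) Q &
      forall Q', prime_in R Q' -> ssub (scap P R) Q' -> ssub Q' Q -> ssub Q Q'].

(* r^{[-1]} V = { P ∈ Spec S : r P ⊆ V }, with S the whole ring T. *)
Definition rpre (R : sset T) (V : sset (sset T)) : sset (sset T) :=
  fun P => prime_in (@sall T) P /\ forall Q, rcorr R P Q -> V Q.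

Definition r_continuous (R : sset T) : Prop :=
  forall V, closed_in R V -> closed_in (@sall T) (rpre R V).

End RingSpec.

Definition gen_subalg (k : fieldType) (S : algType k) (a : S) : sset S :=
  fun x => exists p : {poly k}, x = horner_alg a p.

Definition sl2_rel (k : fieldType) (A : algType k) (e f h : A) : Prop :=
  [/\ h * e - e * h = e *+ 2, h * f - f * h = - (f *+ 2) & e * f - f * e = h].

Definition is_U_sl2 (k : fieldType) (S : algType k) (E F H : S) : Prop :=
  sl2_rel E F H /\
  forall (A : algType k) (e f h : A), sl2_rel e f h ->
    (exists phi : {lrmorphism S -> A}, [/\ phi E = e, phi F = f & phi H = h]) /\
    (forall phi psi : {lrmorphism S -> A},
       phi E = psi E -> phi F = psi F -> phi H = psi H -> forall x, phi x = psi x).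

(* Main.v *)
Require Import Defs.
From HB Require Import structures.
From mathcomp Require Import all_boot all_algebra.
From mathcomp Require Import boolp ring.
From Stdlib Require Import ProofIrrelevance Classical.
Set Implicit Arguments. Unset Strict Implicit. Unset Printing Implicit Defensive.
Import GRing.Theory.
Local Open Scope ring_scope.

Section Lsum.
Variables (R : nzRingType) (V : lmodType R).
Definition lsum (f : nat -> V) (p : {poly R}) : V := \sum_(l < size p) p`_l *: f l.

Lemma lsum_bound (f : nat -> V) (p : {poly R}) n : (size p <= n)%N -> lsum f p = \sum_(l < n) p`_l *: f l.
Proof.
move=> hn; rewrite /lsum (big_ord_widen n (fun l => p`_l *: f l) hn).
rewrite big_mkcond /=; apply: eq_bigr => i _; case: ifP => // /negbT.
by rewrite -leqNgt => /(nth_default 0) ->; rewrite scale0r.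
Qed.

Lemma lsumD (f : nat -> V) (p q : {poly R}) : lsum f (p + q) = lsum f p + lsum f q.
Proof.
rewrite (@lsum_bound _ _ (maxn (size p) (size q))) ?size_polyD //.
rewrite (@lsum_bound _ p (maxn (size p) (size q))) ?leq_maxl //.
rewrite (@lsum_bound _ q (maxn (size p) (size q))) ?leq_maxr //.
by rewrite -big_split /=; apply: eq_bigr => i _; rewrite coefD scalerDl.
Qed.

Lemma lsumZ (f : nat -> V) a (p : {poly R}) : lsum f (a *: p) = a *: lsum f p.
Proof.
rewrite (@lsum_bound _ _ (size p)) ?size_scale_leq // /lsum scaler_sumr.
by apply: eq_bigr => i _; rewrite coefZ scalerA.
Qed.

Lemma lsum0 (f : nat -> V) : lsum f 0 = 0.
Proof. by rewrite /lsum size_poly0 big_ord0. Qed.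

Lemma lsumN (f : nat -> V) (p : {poly R}) : lsum f (- p) = - lsum f p.
Proof. by rewrite -(scaleN1r p) lsumZ scaleN1r. Qed.

Lemma lsumB (f : nat -> V) (p q : {poly R}) : lsum f (p - q) = lsum f p - lsum f q.
Proof. by rewrite lsumD lsumN. Qed.

Lemma lsum_sum (f : nat -> V) I (r : seq I) (P : pred I) (F : I -> {poly R}) :
  lsum f (\sum_(i <- r | P i) F i) = \sum_(i <- r | P i) lsum f (F i).
Proof.
by apply: (big_morph (lsum f)); [exact: lsumD | exact: lsum0].
Qed.

Lemma lsumXn (f : nat -> V) m : lsum f 'X^m = f m.
Proof.
rewrite /lsum size_polyXn big_ord_recr /= coefXn eqxx scale1r big1 ?add0r //.
by move=> i _; rewrite coefXn ltn_eqF // scale0r.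
Qed.

Lemma lsumZXn (f : nat -> V) a m : lsum f (a *: 'X^m) = a *: f m.
Proof. by rewrite lsumZ lsumXn. Qed.

Lemma lsum_fD (f g : nat -> V) (p : {poly R}) : lsum (fun l => f l + g l) p = lsum f p + lsum g p.
Proof. by rewrite /lsum -big_split; apply: eq_bigr => i _; rewrite scalerDr. Qed.

Lemma lsum_fN (f : nat -> V) (p : {poly R}) : lsum (fun l => - f l) p = - lsum f p.
Proof. by rewrite /lsum -sumrN; apply: eq_bigr => i _; rewrite scalerN. Qed.

Lemma lsum_f0 (p : {poly R}) : lsum (fun _ => 0) p = 0.
Proof. by rewrite /lsum big1 // => i _; rewrite scaler0. Qed.

Lemma lsum_ext (f g : nat -> V) (p : {poly R}) : (forall l, (l < size p)%N -> f l = g l) -> lsum f p = lsum g p.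
Proof. by move=> h; apply: eq_bigr => i _; rewrite h. Qed.
End Lsum.

Lemma lsum_comp (R : nzRingType) (f : nat -> {poly R}) (g : nat -> {poly R}) p :
  lsum f (lsum g p) = lsum (fun l => lsum f (g l)) p.
Proof.
by rewrite [lsum g p]/lsum lsum_sum [RHS]/lsum; apply: eq_bigr => i _; rewrite lsumZ.
Qed.

Lemma lsumX (R : nzRingType) p : lsum (fun l => 'X^l) p = p :> {poly R}.
Proof. by rewrite /lsum -poly_def coefK. Qed.

Lemma lsum_fZ (R : comNzRingType) (V : lmodType R) (f : nat -> V) a p :
  lsum (fun l => a *: f l) p = a *: lsum f p.
Proof.
rewrite /lsum scaler_sumr; apply: eq_bigr => i _; by rewrite !scalerA mulrC.
Qed.

Section Gop.
Variable k : fieldType.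
Local Notation PP := {poly {poly k}}.

Definition good (M : nat -> PP) := forall n i j, (j <= n)%N -> (n < i)%N ->
  ((M j)`_i).[n%:R] = 0.

Record gop := GOp { gf : nat -> PP; gfP : good gf }.

Lemma gop_ext (M N : gop) : gf M = gf N -> M = N.
Proof.
case: M N => [f fP] [g gP] /= efg; subst g; congr GOp; exact: proof_irrelevance.
Qed.

HB.instance Definition _ := gen_eqMixin gop.
HB.instance Definition _ := gen_choiceMixin gop.

Fact good0 : good (fun _ => 0).
Proof. by move=> n i j _ _; rewrite coef0 horner0. Qed.
Fact goodD (M N : gop) : good (fun j => gf M j + gf N j).
Proof. by move=> n i j h1 h2; rewrite coefD hornerD (gfP M) ?(gfP N) ?addr0. Qed.
Fact goodN (M : gop) : good (fun j => - gf M j).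
Proof. by move=> n i j h1 h2; rewrite coefN hornerN (gfP M) ?oppr0. Qed.
Fact good1 : good (fun j => 'X^j).
Proof.
move=> n i j h1 h2; rewrite coefXn; case: eqP => [eij|]; last by rewrite horner0.
by subst i; move: (leq_ltn_trans h1 h2); rewrite ltnn.
Qed.
Fact goodM (M N : gop) : good (fun j => lsum (gf M) (gf N j)).
Proof.
move=> n i j h1 h2; rewrite /lsum coef_sum horner_sum big1 // => l _.
rewrite coefZ hornerM; case: (leqP l n) => hl.
  by rewrite (gfP M hl h2) mulr0.
by rewrite (gfP N h1 hl) mul0r.
Qed.
Fact goodZ (a : k) (M : gop) : good (fun j => a%:P *: gf M j).
Proof. by move=> n i j h1 h2; rewrite coefZ hornerM (gfP M) ?mulr0. Qed.

Definition gzero := GOp good0.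
Definition gadd M N := GOp (goodD M N).
Definition gopp M := GOp (goodN M).
Definition gone := GOp good1.
Definition gmul M N := GOp (goodM M N).
Definition gscale a M := GOp (goodZ a M).

Fact gaddA : associative gadd.
Proof. by move=> x y z; apply: gop_ext; apply: funext => j /=; rewrite addrA. Qed.
Fact gaddC : commutative gadd.
Proof. by move=> x y; apply: gop_ext; apply: funext => j /=; rewrite addrC. Qed.
Fact gadd0 : left_id gzero gadd.
Proof. by move=> x; apply: gop_ext; apply: funext => j /=; rewrite add0r. Qed.
Fact gaddN : left_inverse gzero gopp gadd.
Proof. by move=> x; apply: gop_ext; apply: funext => j /=; rewrite addNr. Qed.

HB.instance Definition _ := GRing.isZmodule.Build gop gaddA gaddC gadd0 gaddN.

Fact gmulA : associative gmul.
Proof. by move=> x y z; apply: gop_ext; apply: funext => j /=; rewrite lsum_comp. Qed.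
Fact gmul1 : left_id gone gmul.
Proof. by move=> x; apply: gop_ext; apply: funext => j /=; rewrite lsumX. Qed.
Fact gmulr1 : right_id gone gmul.
Proof. by move=> x; apply: gop_ext; apply: funext => j /=; rewrite lsumXn. Qed.
Fact gmulDl : left_distributive gmul +%R.
Proof. by move=> x y z; apply: gop_ext; apply: funext => j /=; rewrite lsum_fD. Qed.
Fact gmulDr : right_distributive gmul +%R.
Proof. by move=> x y z; apply: gop_ext; apply: funext => j /=; rewrite lsumD. Qed.
Fact gone_neq0 : gone != 0.
Proof.
apply/eqP => /(congr1 (fun M => gf M 0)) /= /eqP.
by rewrite expr0 oner_eq0.
Qed.

HB.instance Definition _ := GRing.Zmodule_isNzRing.Build gop gmulA gmul1 gmulr1 gmulDl gmulDr gone_neq0.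

Fact gscaleA a b v : gscale a (gscale b v) = gscale (a * b) v.
Proof. by apply: gop_ext; apply: funext => j /=; rewrite scalerA polyCM. Qed.
Fact gscale1 : left_id 1 gscale.
Proof. by move=> x; apply: gop_ext; apply: funext => j /=; rewrite scale1r. Qed.
Fact gscaleDr : right_distributive gscale +%R.
Proof. by move=> a x y; apply: gop_ext; apply: funext => j /=; rewrite scalerDr. Qed.
Fact gscaleDl v : {morph gscale^~ v: a b / a + b}.
Proof. by move=> a b; apply: gop_ext; apply: funext => j /=; rewrite polyCD scalerDl. Qed.

HB.instance Definition _ := GRing.Zmodule_isLmodule.Build k gop gscaleA gscale1 gscaleDr gscaleDl.

Fact gscaleAl (a : k) (u v : gop) : a *: (u * v) = (a *: u) * v.
Proof. by apply: gop_ext; apply: funext => j /=; rewrite lsum_fZ. Qed.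
HB.instance Definition _ := GRing.Lmodule_isLalgebra.Build k gop gscaleAl.
Fact gscaleAr (a : k) (u v : gop) : a *: (u * v) = u * (a *: v).
Proof. by apply: gop_ext; apply: funext => j /=; rewrite lsumZ. Qed.
HB.instance Definition _ := GRing.Lalgebra_isAlgebra.Build k gop gscaleAr.

Lemma gfD (M N : gop) j : gf (M + N) j = gf M j + gf N j. Proof. by []. Qed.
Lemma gfN (M : gop) j : gf (- M) j = - gf M j. Proof. by []. Qed.
Lemma gf0 j : gf (0 : gop) j = 0. Proof. by []. Qed.
Lemma gf1 j : gf (1 : gop) j = 'X^j. Proof. by []. Qed.
Lemma gfM (M N : gop) j : gf (M * N) j = lsum (gf M) (gf N j). Proof. by []. Qed.
Lemma gfZ a (M : gop) j : gf (a *: M) j = a%:P *: gf M j. Proof. by []. Qed.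

End Gop.

Section Sl2.
Variable k : fieldType.
Local Notation PP := {poly {poly k}}.

Definition ef (j : nat) : PP := (j%:R : {poly k}) *: 'X^(j.-1).
Definition ff (j : nat) : PP := ('X - (j%:R : {poly k})) *: 'X^(j.+1).
Definition hf (j : nat) : PP := ('X - (j.*2%:R : {poly k})) *: 'X^j.

Fact good_e : good ef.
Proof.
move=> n i j h1 h2; rewrite /ef coefZ coefXn; case: eqP => [eij|]; last by rewrite mulr0 horner0.
by subst i; have := leq_ltn_trans h1 h2; case: j {h1 h2} => //= j; rewrite ltnNge leqnSn.
Qed.
Fact good_f : good ff.
Proof.
move=> n i j h1 h2; rewrite /ff coefZ coefXn; case: eqP => [eij|]; last by rewrite mulr0 horner0.
subst i; have -> : n = j by apply: anti_leq; rewrite -ltnS h2 h1.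
by rewrite mulr1 !hornerE hornerMn hornerC subrr.
Qed.
Fact good_h : good hf.
Proof.
move=> n i j h1 h2; rewrite /hf coefZ coefXn; case: eqP => [eij|]; last by rewrite mulr0 horner0.
by subst i; move: (leq_ltn_trans h1 h2); rewrite ltnn.
Qed.

Definition ge : gop k := GOp good_e.
Definition gF : gop k := GOp good_f.
Definition gh : gop k := GOp good_h.

Lemma sl2_g : sl2_rel ge gF gh.
Proof.
split; apply: gop_ext; apply: funext => j;
  rewrite ?mulr2n !(gfD, gfN, gfM) /= /ef /ff /hf !lsumZXn /ef /ff /hf.
- case: j => [|j]; first by rewrite !scale0r ?scaler0 ?subrr ?addr0.
  rewrite /= !scalerA -scalerBl -scalerDl; congr (_ *: _).
  rewrite -!mul2n !natrM; ring.
- rewrite !scalerA -scalerBl -scalerDl -scaleNr; congr (_ *: _).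
  rewrite -!mul2n !natrM; ring.
- case: j => [|j].
    rewrite /= scale0r subr0 scalerA; congr (_ *: _); by rewrite mulr1.
  rewrite /= !scalerA -scalerBl; congr (_ *: _).
  rewrite -!mul2n !natrM; ring.
Qed.
End Sl2.

Section Act.
Variables (k : fieldType) (S : algType k) (E F : S) (phi : {lrmorphism S -> gop k}).
Hypotheses (pE : phi E = ge k) (pF : phi F = gF k).

Definition col (c : k) (x : S) (j : nat) : {poly k} :=
  map_poly (horner_eval c) (gf (phi x) j).
Definition act (c : k) (x : S) (v : {poly k}) := lsum (col c x) v.

Lemma col_coef c x j i : (col c x j)`_i = ((gf (phi x) j)`_i).[c].
Proof. by rewrite coef_map. Qed.

Lemma colD c x y j : col c (x + y) j = col c x j + col c y j.
Proof. by rewrite /col rmorphD gfD rmorphD. Qed.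
Lemma colN c x j : col c (- x) j = - col c x j.
Proof. by rewrite /col rmorphN gfN rmorphN. Qed.
Lemma col0 c j : col c 0 j = 0.
Proof. by rewrite /col rmorph0 gf0 rmorph0. Qed.
Lemma colB c x y j : col c (x - y) j = col c x j - col c y j.
Proof. by rewrite colD colN. Qed.
Lemma colZ c a x j : col c (a *: x) j = a *: col c x j.
Proof. by rewrite /col linearZZ gfZ map_polyZ /= horner_evalE hornerC. Qed.
Lemma col1 c j : col c 1 j = 'X^j.
Proof. by rewrite /col rmorph1 gf1 map_polyXn. Qed.

Lemma map_lsum c (G : nat -> {poly {poly k}}) p :
  map_poly (horner_eval c) (lsum G p) =
  lsum (fun l => map_poly (horner_eval c) (G l)) (map_poly (horner_eval c) p).
Proof.
rewrite (@lsum_bound _ _ (fun l => map_poly (horner_eval c) (G l)) _ (size p)); last first.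
  by apply/leq_sizeP => i hi; rewrite coef_map (nth_default 0 hi) raddf0.
rewrite /lsum rmorph_sum; apply: eq_bigr => i _.
by rewrite -mul_polyC rmorphM /= map_polyC mul_polyC coef_map.
Qed.

Lemma colM c x y j : col c (x * y) j = act c x (col c y j).
Proof. by rewrite /col rmorphM gfM map_lsum. Qed.

Lemma colE c j : col c E j = j%:R *: 'X^(j.-1).
Proof. by rewrite /col pE /= /ef map_polyZ map_polyXn /= rmorph_nat. Qed.
Lemma colF c j : col c F j = (c - j%:R) *: 'X^(j.+1).
Proof.
by rewrite /col pF /= /ff map_polyZ map_polyXn /= horner_evalE hornerD hornerN hornerX hornerMn hornerC.
Qed.

Lemma actXn c x j : act c x 'X^j = col c x j.
Proof. exact: lsumXn. Qed.
Lemma actvD c x v w : act c x (v + w) = act c x v + act c x w.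
Proof. exact: lsumD. Qed.
Lemma actvZ c x a v : act c x (a *: v) = a *: act c x v.
Proof. exact: lsumZ. Qed.
Lemma actv0 c x : act c x 0 = 0.
Proof. exact: lsum0. Qed.
Lemma act_mul c x y v : act c (x * y) v = act c x (act c y v).
Proof.
rewrite /act lsum_comp; apply: lsum_ext => l _; by rewrite colM.
Qed.
Lemma act1 c v : act c 1 v = v.
Proof. by rewrite /act (lsum_ext (g := fun l => 'X^l)) ?lsumX // => l _; rewrite col1. Qed.
Lemma actxD c x y v : act c (x + y) v = act c x v + act c y v.
Proof. by rewrite /act -lsum_fD; apply: lsum_ext => l _; rewrite colD. Qed.
Lemma actx0 c v : act c 0 v = 0.
Proof. by rewrite /act (lsum_ext (g := fun _ => 0)) ?lsum_f0 // => l _; rewrite col0. Qed.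
Lemma actxZ c a x v : act c (a *: x) v = a *: act c x v.
Proof. by rewrite /act -lsum_fZ; apply: lsum_ext => l _; rewrite colZ. Qed.
Lemma actx_sum c I (r : seq I) (P : pred I) (G : I -> S) v :
  act c (\sum_(i <- r | P i) G i) v = \sum_(i <- r | P i) act c (G i) v.
Proof.
by apply: (big_morph (fun x => act c x v)); [move=> ??; exact: actxD | exact: actx0].
Qed.

Lemma actEn c m l : act c (E ^+ m) 'X^l = (l ^_ m)%:R *: 'X^(l - m).
Proof.
elim: m => [|m IH]; first by rewrite expr0 act1 ffactn0 subn0 scale1r.
rewrite exprS act_mul IH actvZ actXn colE scalerA -natrM ffactnSr subnS.
by [].
Qed.

Lemma actFn c m l : act c (F ^+ m) 'X^l =
  (\prod_(q < m) (c - (l + q)%:R)) *: 'X^(l + m).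
Proof.
elim: m => [|m IH]; first by rewrite expr0 act1 big_ord0 addn0 scale1r.
rewrite exprS act_mul IH actvZ actXn colF scalerA big_ord_recr /= addnS.
by [].
Qed.

Lemma actE_lead c (v : {poly k}) : act c (E ^+ (size v).-1) v =
  (lead_coef v * ((size v).-1)`!%:R) *: 1.
Proof.
rewrite {1}/act /lsum lead_coefE; case hs: (size v) => [|d].
  by rewrite big_ord0 /= nth_default ?hs // mul0r scale0r.
rewrite big_ord_recr /= big1 ?add0r.
  by rewrite -actXn actEn ffactnn subnn expr0 scalerA.
move=> i _; by rewrite -actXn actEn ffact_small ?scale0r ?scaler0 // ltn_ord.
Qed.
End Act.

Section Ann.
Variables (k : fieldType) (S : algType k) (E F : S) (phi : {lrmorphism S -> gop k}).
Hypotheses (pE : phi E = ge k) (pF : phi F = gF k).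
Hypothesis hchar : [pchar k] =i pred0.

Definition Ann c (B : pred nat) : sset S := fun x => forall j, B j -> col phi c x j = 0.

Lemma natk_neq0 n : (n%:R : k) != 0 <-> n != 0%N.
Proof. by have := (proj1 (pcharf0P k) hchar n) => ->. Qed.

Lemma fact_neq0 n : (n`!%:R : k) != 0.
Proof. by apply/natk_neq0; rewrite -lt0n fact_gt0. Qed.

Lemma ann_prime c (B : pred nat) (B0 : B 0%N)
  (Bdown : forall i j, B j -> (i <= j)%N -> B i)
  (Bsupp : forall x j i, B j -> ~~ B i -> (col phi c x j)`_i = 0)
  (Bc : forall q, B q.+1 -> c - q%:R != 0) : prime_in (@sall S) (Ann c B).
Proof.
have hpi m : B m -> \prod_(q < m) (c - (0 + q)%:R) != 0.
  move=> Bm; rewrite prodf_seq_neq0; apply/allP => q _ /=.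
  by rewrite add0n; apply: Bc; apply: (Bdown _ _ Bm); exact: ltn_ord.
split.
- split.
  + by [].
  + by move=> j _; rewrite col0.
  + by move=> x y hx hy j Bj; rewrite colB hx ?hy ?subr0.
  + move=> a x _ hx; split => j Bj.
    * by rewrite colM hx // actv0.
    * rewrite colM /act /lsum big1 // => l _.
      case Bl: (B l); first by rewrite hx ?scaler0.
      by rewrite Bsupp ?Bl ?scale0r.
- move=> h; have := h 1 I 0%N B0; rewrite col1 expr0 => /eqP; by rewrite oner_eq0.
- move=> I J hI hJ hIJ.
  destruct (Classical_Prop.classic (ssub J (Ann c B))) as [hJs|hJs]; [by right|left].
  have [b hb] := not_all_ex_not _ _ hJs; have [Jb nAb] := imply_to_and _ _ hb.
  have [j0 hj0] := not_all_ex_not _ _ nAb; have [Bj0 hv] := imply_to_and _ _ hj0.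
  move=> a Ia j Bj.
  set v := col phi c b j0 in hv.
  have vn0 : v != 0 by apply/eqP.
  set d := (size v).-1.
  set u := (F ^+ j * E ^+ d) * (b * (F ^+ j0 * E ^+ j)).
  have Ju : J u.
    case: hJ => _ _ _ hm.
    exact: (proj1 (hm _ _ Logic.I (proj2 (hm (F ^+ j0 * E ^+ j) _ Logic.I Jb)))).
  have [g gn0 hg] : exists2 g, g != 0 & act phi c u 'X^j = g *: 'X^j.
    rewrite /u !act_mul (actEn pE) subnn ffactnn actvZ (actFn pF) add0n.
    rewrite !actvZ actXn -/v (actE_lead pE) -/d !actvZ.
    have -> : (1 : {poly k}) = 'X^0 by rewrite expr0.
    rewrite (actFn pF) add0n !scalerA.
    eexists; last by reflexivity.
    rewrite !mulf_neq0 ?fact_neq0 ?hpi ?lead_coef_eq0 //.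
  have := hIJ a u Ia Ju j Bj.
  rewrite colM -actXn hg actvZ actXn => /eqP; rewrite scaler_eq0 (negbTE gn0) /=.
  by move/eqP.
Qed.
End Ann.

Section Rsub.
Variables (k : fieldType) (S : algType k) (a : S).
Local Notation R := (gen_subalg a).

Lemma R0 : R 0. Proof. by exists 0; rewrite raddf0. Qed.
Lemma R1 : R 1. Proof. by exists 1; rewrite rmorph1. Qed.
Lemma Ra : R a. Proof. by exists 'X; rewrite horner_algX. Qed.
Lemma RM x y : R x -> R y -> R (x * y).
Proof. by move=> [p ->] [q ->]; exists (p * q); rewrite rmorphM. Qed.
Lemma RB x y : R x -> R y -> R (x - y).
Proof. by move=> [p ->] [q ->]; exists (p - q); rewrite rmorphB. Qed.
Lemma Rcomm x y : R x -> R y -> x * y = y * x.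
Proof. by move=> [p ->] [q ->]; rewrite -!rmorphM mulrC. Qed.
Lemma Rpow m : R (a ^+ m).
Proof. by exists ('X ^+ m); rewrite rmorphXn /= horner_algX. Qed.

Lemma princ_ideal y : R y -> ideal_in R (fun x => exists r, R r /\ x = r * y).
Proof.
move=> Ry; split.
- by move=> x [r [Rr ->]]; exact: RM.
- by exists 0; split; [exact: R0 | rewrite mul0r].
- move=> x z [r [Rr ->]] [s [Rs ->]]; exists (r - s); split; first exact: RB.
  by rewrite mulrBl.
- move=> b x Rb [r [Rr ->]]; split.
  + by exists (b * r); split; [exact: RM | rewrite mulrA].
  + by exists (r * b); split; [exact: RM | rewrite -!mulrA (Rcomm Ry Rb)].
Qed.

Lemma pow_prime (Q : sset S) m : prime_in R Q -> Q (a ^+ m.+1) -> Q a.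
Proof.
move=> hQ; elim: m => [|m IH]; first by rewrite expr1.
move=> hm; case: (hQ) => [[_ _ _ hmul] _ hpr].
have := hpr _ _ (princ_ideal Ra) (princ_ideal (Rpow m.+1)).
case.
- move=> r s [r' [Rr' ->]] [s' [Rs' ->]].
  rewrite -mulrA (mulrA a) (Rcomm Ra Rs') -mulrA -exprS mulrA.
  exact: (proj1 (hmul _ _ (RM Rr' Rs') hm)).
- by move=> h; apply: h; exists 1; split; [exact: R1 | rewrite mul1r].
- by move=> h; apply: IH; apply: h; exists 1; split; [exact: R1 | rewrite mul1r].
Qed.
End Rsub.

Lemma natk_inj (k : fieldType) : [pchar k] =i pred0 -> forall m1 m2, (m1%:R : k) = m2%:R -> m1 = m2.
Proof.
move=> hchar.
suff H : forall m1 m2, (m1 <= m2)%N -> (m1%:R : k) = m2%:R -> m1 = m2.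
  by move=> m1 m2 e; case/orP: (leq_total m1 m2) => h; [exact: H | symmetry; exact: H].
move=> m1 m2 h e; have : ((m2 - m1)%:R : k) == 0 by rewrite natrB // e subrr.
rewrite (proj1 (pcharf0P k) hchar) subn_eq0 => h2.
by apply/eqP; rewrite eqn_leq h h2.
Qed.

Lemma roots_zero (k : fieldType) : [pchar k] =i pred0 -> forall (q : {poly k}) N,
  (forall m, q.[(N + m)%:R] = 0) -> q = 0.
Proof.
move=> hchar q N h.
apply: (@roots_geq_poly_eq0 _ q [seq (N + m)%:R | m <- iota 0 (size q)]).
- by apply/allP => x /mapP [m _ ->]; apply/eqP; exact: h.
- rewrite map_inj_uniq ?iota_uniq // => m1 m2 /(natk_inj hchar).
  by move/eqP; rewrite eqn_add2l => /eqP.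
- by rewrite size_map size_iota.
Qed.

Section Main.
Variables (k : fieldType) (S : algType k) (E F : S) (phi : {lrmorphism S -> gop k}).
Hypotheses (pE : phi E = ge k) (pF : phi F = gF k).
Hypothesis hchar : [pchar k] =i pred0.

Local Notation R := (gen_subalg E).
Local Notation I := (fun x => exists r, R r /\ x = r * E).
Local Notation Q := (Ann phi (-1) predT).
Local Notation P n := (Ann phi n%:R (fun j => (j <= n)%N)).

Lemma Q_prime : prime_in (@sall S) Q.
Proof.
apply: (ann_prime pE pF hchar) => //.
move=> q _; rewrite -oppr_eq0 opprB opprK natr1; exact/(natk_neq0 hchar).
Qed.

Lemma P_prime n : prime_in (@sall S) (P n).
Proof.
apply: (ann_prime pE pF hchar) => //.
- by move=> i j hj hij; exact: leq_trans hij hj.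
- move=> x j i hj hi; rewrite col_coef; apply: (gfP (phi x) hj).
  by rewrite ltnNge.
- move=> q hq; rewrite -natrB ?(ltnW hq) //; apply/(natk_neq0 hchar).
  by rewrite subn_eq0 -ltnNge.
Qed.

Lemma E_pow_P n : P n (E ^+ n.+1).
Proof.
by move=> j hj; rewrite -actXn (actEn pE) ffact_small ?scale0r // ltnS.
Qed.

Lemma hE_sum c p v : act phi c (horner_alg E p) v =
  \sum_(i < size p) p`_i *: act phi c (E ^+ i) v.
Proof.
rewrite -[p in horner_alg _ p]coefK poly_def rmorph_sum actx_sum.
apply: eq_bigr => i _; by rewrite -mul_polyC rmorphM /= horner_algC rmorphXn /= horner_algX mulr_algl actxZ.
Qed.

Lemma hE_notQ p : p != 0 -> ~ Q (horner_alg E p).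
Proof.
move=> pn0 hQ; have := hQ (size p).-1 isT.
rewrite -actXn hE_sum => /(congr1 (fun w : {poly k} => w`_0)).
have hs : size p = ((size p).-1).+1 by rewrite prednK // size_poly_gt0.
move: (lead_coefE p); set d := (size p).-1 => hl.
rewrite coef_sum coef0 hs big_ord_recr /= big1 ?add0r.
  rewrite (actEn pE) ffactnn subnn !coefZ coefXn eqxx mulr1 => /eqP.
  by rewrite mulf_eq0 (negbTE (fact_neq0 hchar d)) orbF -hl lead_coef_eq0 (negbTE pn0).
move=> i _; rewrite (actEn pE) !coefZ coefXn.
by rewrite eq_sym subn_eq0 leqNgt ltn_ord /= !mulr0.
Qed.

Lemma Q0 : Q 0.
Proof. by move=> j _; rewrite col0. Qed.

Lemma hE_ne0 p : p != 0 -> horner_alg E p <> 0.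
Proof. by move=> pn0 h; apply: (hE_notQ pn0); rewrite h; exact: Q0. Qed.

Lemma E_ne0 : E <> 0.
Proof.
move=> h; have := @hE_ne0 'X; rewrite horner_algX polyX_eq0; exact.
Qed.

Lemma zero_prime : prime_in R (fun x => x = 0).
Proof.
split.
- split.
  + by move=> x ->; exact: R0.
  + by [].
  + by move=> x y -> ->; rewrite subrr.
  + by move=> a x _ ->; rewrite mulr0 mul0r.
- move=> h; apply: (@hE_ne0 1 (oner_neq0 _)); rewrite rmorph1.
  exact: h 1 (R1 E).
- move=> I1 J1 hI hJ hp.
  destruct (Classical_Prop.classic (ssub I1 (fun x => x = 0))) as [h|h]; [by left|right].
  have [a ha] := not_all_ex_not _ _ h; have [Ia an0] := imply_to_and _ _ ha.
  move=> b Jb; apply: NNPP => bn0.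
  case: hI => [hIR _ _ _]; case: hJ => [hJR _ _ _].
  have [p ep] := hIR a Ia; have [q eq] := hJR b Jb.
  have pn0 : p != 0 by apply/eqP => p0; apply: an0; rewrite ep p0 raddf0.
  have qn0 : q != 0 by apply/eqP => q0; apply: bn0; rewrite eq q0 raddf0.
  apply: (hE_ne0 (mulf_neq0 pn0 qn0)); rewrite rmorphM /= -ep -eq; exact: hp.
Qed.

Lemma rcorr_zero : rcorr R Q (fun x => x = 0).
Proof.
split; first exact: zero_prime.
- move=> x [hQ [p ep]]; case: (eqVneq p 0) => [p0|pn0].
    by rewrite ep p0 raddf0.
  by exfalso; apply: (hE_notQ pn0); rewrite -ep.
- move=> Q' [[_ hQ'0 _ _] _ _] _ _ x ->; exact: hQ'0.
Qed.

Lemma P_rpre n : rpre R (Vset R I) (P n).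
Proof.
split; first exact: P_prime.
move=> Q' [hQ' hsub _]; split => //.
have QE : Q' E.
  apply: (pow_prime hQ' (m := n)); apply: hsub; split; [exact: E_pow_P | exact: Rpow].
move=> x [r [Rr ->]]; case: hQ' => [[_ _ _ hm] _ _]; exact: (proj1 (hm r E Rr QE)).
Qed.

Lemma key : ~ closed_in (@sall S) (rpre R (Vset R I)).
Proof.
move=> [X [_ hX]].
have XP n : ssub X (P n) by exact: (proj2 (proj1 (hX (P n)) (P_rpre n))).
have XQ : ssub X Q.
  move=> x Xx j _; apply/polyP => i; rewrite coef0 col_coef.
  have -> : (gf (phi x) j)`_i = 0.
    apply: (roots_zero hchar (N := (i + j)%N)) => m.
    have := XP (i + j + m)%N x Xx j.
    have hj : (j <= i + j + m)%N by rewrite addnAC leq_addl.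
    move=> /(_ hj) /(congr1 (fun w : {poly k} => w`_i)); rewrite col_coef coef0.
    by [].
  by rewrite horner0.
have [_ hall] := proj2 (hX Q) (conj Q_prime XQ).
have [_ hI] := hall _ rcorr_zero.
apply: E_ne0; apply: hI; exists 1; split; [exact: R1 | by rewrite mul1r].
Qed.
End Main.

Theorem mainTheorem5 (k : fieldType) (S : algType k) (E F H : S) :
  [pchar k] =i pred0 ->
  is_U_sl2 E F H ->
  let R := gen_subalg E in
  let I : sset S := fun x => exists r, R r /\ x = r * E in
  ~ r_continuous R /\ ~ closed_in (@sall S) (rpre R (Vset R I)).
Proof.
move=> hchar [_ hU] R I.
have [[phi [pE pF _]] _] := hU (gop k) (ge k) (gF k) (gh k) (sl2_g k).
have hk := key pE pF hchar.
split; last exact: hk.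
move=> hc; apply: hk; apply: hc.
exists I; split; last by move=> P.
by move=> x [r [Rr ->]]; apply: RM => //; exact: Ra.
Qed.
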